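(* Let $R>0$, let $K\subset\mathbb{R}^2$ be the closed disk of radius $R$ centered at the origin, and let $f\colon\mathbb{R}\to(0,\infty)$ be a continuously differentiable convex function with $t^2+f(t)^2>R^2$ for all $t$; let $L=\{(t,y)\mid f(t)\le y\}$. Put $$\alpha(t)=\frac{tf'(t)-f(t)}{\sqrt{1+f'(t)^2}}.$$ Then for every point $(x,y)$ with $d((x,y),K)=d((x,y),L)$ there is $t\in\mathbb{R}$ with $\alpha(t)<R$ (namely, $(t,f(t))$ is the point of $L$ nearest to $(x,y)$) such that $$x=t+\frac{f'(t)}{2\sqrt{1+f'(t)^2}}\cdot\frac{t^2+f(t)^2-R^2}{R-\alpha(t)},\qquad y=f(t)-\frac{1}{2\sqrt{1+f'(t)^2}}\cdot\frac{t^2+f(t)^2-R^2}{R-\alpha(t)}.$$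
   Context: $d(p,A)=\inf\{|p-q|\mid q\in A\}$ (Euclidean distance). *)

(* Defs.v *)
From Stdlib Require Import Reals.
From Coquelicot Require Import Coquelicot.
Open Scope R_scope.

Definition euclid (p q : R * R) : R :=
  sqrt ((fst p - fst q) ^ 2 + (snd p - snd q) ^ 2).

Definition dist_set (p : R * R) (A : R * R -> Prop) : Rbar :=
  Glb_Rbar (fun r => exists q, A q /\ r = euclid p q).

Definition disk (Rad : R) : R * R -> Prop :=
  fun q => fst q ^ 2 + snd q ^ 2 <= Rad ^ 2.

Definition epi (f : R -> R) : R * R -> Prop :=
  fun q => f (fst q) <= snd q.

Definition convex_fun (f : R -> R) : Prop :=
  forall x y l, 0 <= l <= 1 -> f (l * x + (1 - l) * y) <= l * f x + (1 - l) * f y.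

Definition alpha (f : R -> R) (t : R) : R :=
  (t * Derive f t - f t) / sqrt (1 + (Derive f t) ^ 2).

(* Main.v *)
Require Import Defs.
From Stdlib Require Import Reals Lra Psatz.
From Coquelicot Require Import Coquelicot.
Open Scope R_scope.

Lemma glb_attained (p : R * R) (A : R * R -> Prop) q0 :
  A q0 -> (forall q, A q -> euclid p q0 <= euclid p q) ->
  dist_set p A = Finite (euclid p q0).
Proof.
  intros Hq0 Hmin. unfold dist_set. apply is_glb_Rbar_unique. split.
  - intros r [q [Hq ->]]. simpl. now apply Hmin.
  - intros b Hb. apply Hb. exists q0. split; auto.
Qed.

Lemma tangent (f : R -> R) t D : convex_fun f -> derivable_pt_lim f t D ->
  forall a, f t + D * (a - t) <= f a.
Proof.
  intros Hc Hd a.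
  destruct (Rle_or_lt (f t + D * (a - t)) (f a)) as [H|H]; [exact H|exfalso].
  set (gap := f t + D * (a - t) - f a).
  assert (Hg : 0 < gap) by (unfold gap; lra).
  assert (Hat : a <> t) by (intro E; subst a; unfold gap in Hg; lra).
  set (k := Rabs (a - t)).
  assert (Hk : 0 < k) by (apply Rabs_pos_lt; lra).
  destruct (Hd (gap / (2 * k))) as [delta Hdel].
  { apply Rdiv_lt_0_compat; lra. }
  set (l := Rmin 1 (delta / (2 * k))).
  assert (Hl0 : 0 < l).
  { unfold l. apply Rmin_pos; [lra|]. apply Rdiv_lt_0_compat. apply cond_pos. lra. }
  assert (Hl1 : l <= 1) by apply Rmin_l.
  assert (Hl2 : l <= delta / (2 * k)) by apply Rmin_r.
  set (hh := l * (a - t)).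
  assert (Hh0 : hh <> 0).
  { unfold hh. apply Rmult_integral_contrapositive; split; lra. }
  assert (Hhd : Rabs hh < delta).
  { unfold hh. rewrite Rabs_mult, (Rabs_right l) by lra. fold k.
    assert (l * k <= delta / 2).
    { apply Rmult_le_compat_r with (r := k) in Hl2; [|lra].
      replace (delta / (2 * k) * k) with (delta / 2) in Hl2 by (field; lra). lra. }
    pose proof (cond_pos delta). lra. }
  specialize (Hdel hh Hh0 Hhd).
  set (q := (f (t + hh) - f t) / hh) in Hdel.
  assert (Hq : f (t + hh) - f t = q * hh) by (unfold q; field; auto).
  assert (Hcv := Hc a t l (conj (Rlt_le _ _ Hl0) Hl1)).
  replace (l * a + (1 - l) * t) with (t + hh) in Hcv by (unfold hh; ring).
  assert (Hq2 : q * (a - t) <= f a - f t).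
  { assert (l * (q * (a - t)) <= l * (f a - f t)).
    { replace (l * (q * (a - t))) with (q * hh) by (unfold hh; ring). lra. }
    apply Rmult_le_reg_l with l; lra. }
  assert (Hq3 : Rabs ((q - D) * (a - t)) < gap / 2).
  { rewrite Rabs_mult. fold k.
    apply Rlt_le_trans with (gap / (2 * k) * k).
    - apply Rmult_lt_compat_r; auto.
    - right. field. lra. }
  apply Rabs_def2 in Hq3. unfold gap in *. lra.
Qed.

Lemma triangle (x y a b : R) :
  sqrt (x^2 + y^2) <= sqrt ((x - a)^2 + (y - b)^2) + sqrt (a^2 + b^2).
Proof.
  set (u := sqrt ((x - a)^2 + (y - b)^2)). set (v := sqrt (a^2 + b^2)).
  assert (Hu : 0 <= u) by apply sqrt_pos. assert (Hv : 0 <= v) by apply sqrt_pos.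
  assert (Hu2 : u * u = (x - a)^2 + (y - b)^2) by (unfold u; apply sqrt_sqrt; apply Rplus_le_le_0_compat; apply pow2_ge_0).
  assert (Hv2 : v * v = a^2 + b^2) by (unfold v; apply sqrt_sqrt; apply Rplus_le_le_0_compat; apply pow2_ge_0).
  assert (Hcs : a * (x - a) + b * (y - b) <= u * v).
  { assert (E : (u*v)*(u*v) - (a*(x-a) + b*(y-b))^2 = (a*(y-b) - b*(x-a))^2).
    { replace ((u*v)*(u*v)) with ((u*u)*(v*v)) by ring. rewrite Hu2, Hv2. ring. }
    assert (0 <= u * v) by nra.
    destruct (Rle_or_lt (a * (x - a) + b * (y - b)) (u * v)) as [|Hc]; [auto|].
    exfalso. set (c := a * (x - a) + b * (y - b)) in *.
    assert ((u*v)*(u*v) < c * c) by (apply Rmult_le_0_lt_compat; lra).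
    assert (0 <= (a*(y-b) - b*(x-a))^2) by apply pow2_ge_0. nra. }
  rewrite <- (sqrt_pow2 (u + v)) by lra.
  apply sqrt_le_1_alt. nra.
Qed.

Lemma dist_in (p : R * R) A : A p -> dist_set p A = Finite 0.
Proof.
  intros Hp. rewrite (glb_attained p A p Hp).
  - unfold euclid. f_equal. replace ((fst p - fst p) ^ 2 + (snd p - snd p) ^ 2) with 0 by ring.
    apply sqrt_0.
  - intros q _. unfold euclid. replace ((fst p - fst p) ^ 2 + (snd p - snd p) ^ 2) with 0 by ring.
    rewrite sqrt_0. apply sqrt_pos.
Qed.

Lemma disk_out (R0 x y : R) : 0 < R0 -> R0 < sqrt (x^2 + y^2) ->
  dist_set (x, y) (disk R0) = Finite (sqrt (x^2 + y^2) - R0).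
Proof.
  intros HR HN. set (N := sqrt (x^2 + y^2)) in *.
  assert (HN2 : N * N = x^2 + y^2) by (unfold N; apply sqrt_sqrt; apply Rplus_le_le_0_compat; apply pow2_ge_0).
  assert (HNp : 0 < N) by lra.
  assert (E : euclid (x, y) (R0 * x / N, R0 * y / N) = N - R0).
  { unfold euclid; cbn [fst snd]. rewrite <- (sqrt_pow2 (N - R0)) by lra. f_equal.
    replace ((x - R0 * x / N) ^ 2 + (y - R0 * y / N) ^ 2)
      with ((N - R0)^2 * (x^2 + y^2) / (N * N)) by (field; lra).
    rewrite <- HN2. field. lra. }
  rewrite <- E. apply glb_attained.
  - unfold disk; cbn [fst snd].
    replace ((R0 * x / N) ^ 2 + (R0 * y / N) ^ 2) with (R0^2 * ((x^2+y^2) / (N * N))) by (field; lra).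
    rewrite <- HN2. right. field. lra.
  - intros [a b] Hq. unfold disk in Hq; cbn [fst snd] in Hq. rewrite E.
    pose proof (triangle x y a b).
    assert (sqrt (a^2 + b^2) <= R0).
    { rewrite <- (sqrt_pow2 R0) by lra. apply sqrt_le_1_alt. exact Hq. }
    unfold euclid; cbn [fst snd]. fold N in H. lra.
Qed.

Lemma disk_inside (R0 x y : R) : 0 < R0 -> sqrt (x^2 + y^2) <= R0 ->
  dist_set (x, y) (disk R0) = Finite 0.
Proof.
  intros HR HN. apply dist_in. unfold disk; simpl.
  set (N := sqrt (x^2 + y^2)) in *.
  assert (HN2 : N * N = x^2 + y^2) by (unfold N; apply sqrt_sqrt; apply Rplus_le_le_0_compat; apply pow2_ge_0).
  assert (0 <= N) by apply sqrt_pos. nra.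
Qed.

Theorem theorem5 (Rad : R) (f : R -> R)
  (hR : 0 < Rad)
  (hpos : forall t, 0 < f t)
  (hdiff : forall t, ex_derive f t)
  (hcont : forall t, continuous (Derive f) t)
  (hconv : convex_fun f)
  (hout : forall t, t ^ 2 + f t ^ 2 > Rad ^ 2)
  (x y : R)
  (heq : dist_set (x, y) (disk Rad) = dist_set (x, y) (epi f)) :
  exists t : R,
    alpha f t < Rad /\
    (forall q, epi f q -> euclid (x, y) (t, f t) <= euclid (x, y) q) /\
    x = t + Derive f t / (2 * sqrt (1 + (Derive f t) ^ 2))
            * ((t ^ 2 + f t ^ 2 - Rad ^ 2) / (Rad - alpha f t)) /\
    y = f t - 1 / (2 * sqrt (1 + (Derive f t) ^ 2))
            * ((t ^ 2 + f t ^ 2 - Rad ^ 2) / (Rad - alpha f t)).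
Proof.
  assert (hd : forall t, derivable_pt_lim f t (Derive f t)).
  { intro t. apply is_derive_Reals. apply Derive_correct. apply hdiff. }
  assert (fc : forall t, continuity_pt f t).
  { intro t. apply derivable_continuous_pt. exists (Derive f t). apply hd. }
  set (h := fun t => (x - t)^2 + (y - f t)^2).
  assert (hder : forall t, derivable_pt_lim h t (-2 * (x - t) - 2 * (y - f t) * Derive f t)).
  { intro t. apply is_derive_Reals. unfold h. auto_derive. apply hdiff. change (Derive (fun x : R => f x) t) with (Derive f t). ring. }
  assert (hc : forall t, continuity_pt h t).
  { intro t. apply derivable_continuous_pt. exists (-2 * (x - t) - 2 * (y - f t) * Derive f t). apply hder. }
  set (M := Rabs (y - f x) + 1).
  assert (HM : 0 < M) by (unfold M; pose proof (Rabs_pos (y - f x)); lra).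
  destruct (continuity_ab_min h (x - M) (x + M)) as [t0 [Hmin Ht0]].
  { lra. } { intros; apply hc. }
  assert (Hglob : forall t, h t0 <= h t).
  { intro t. destruct (Rle_or_lt (x - M) t); destruct (Rle_or_lt t (x + M)).
    - apply Hmin; lra.
    - assert (h x < h t).
      { unfold h. replace ((x - x)^2) with 0 by ring.
        assert ((y - f x)^2 < M^2).
        { unfold M. rewrite <- (pow2_abs (y - f x)). pose proof (Rabs_pos (y - f x)). nra. }
        assert (M^2 < (x - t)^2) by nra. pose proof (pow2_ge_0 (y - f t)). lra. }
      pose proof (Hmin x ltac:(lra)). lra.
    - assert (h x < h t).
      { unfold h. replace ((x - x)^2) with 0 by ring.
        assert ((y - f x)^2 < M^2).
        { unfold M. rewrite <- (pow2_abs (y - f x)). pose proof (Rabs_pos (y - f x)). nra. }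
        assert (M^2 < (x - t)^2) by nra. pose proof (pow2_ge_0 (y - f t)). lra. }
      pose proof (Hmin x ltac:(lra)). lra.
    - lra. }
  assert (Hstat : -2 * (x - t0) - 2 * (y - f t0) * Derive f t0 = 0).
  { set (pr := exist (fun l => derivable_pt_lim h t0 l) _ (hder t0) : derivable_pt h t0).
    rewrite <- (derive_pt_eq_0 h t0 _ pr (hder t0)).
    apply (deriv_minimum h (t0 - 1) (t0 + 1)); try lra.
    intros; apply Hglob. }
  set (D0 := Derive f t0) in *. set (f0 := f t0) in *.
  set (s := f0 - y).
  assert (hx : x = t0 + s * D0) by (unfold s; nra).
  assert (hy : y = f0 - s) by (unfold s; ring).
  destruct (Rle_or_lt s 0) as [Hs|Hs].
  - exfalso.
    assert (HpL : epi f (x, y)).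
    { unfold epi; cbn [fst snd]. destruct (Rle_or_lt (f x) y) as [|Hlt]; auto. exfalso.
      destruct (Req_dec s 0) as [Hs0|Hs0].
      { assert (x = t0) by (rewrite hx, Hs0; ring). rewrite H in Hlt. fold f0 in Hlt. unfold s in Hs0. lra. }
      assert (Hs1 : s < 0) by lra.
      assert (Hne : t0 <> x) by (intro E; rewrite <- E in Hlt; fold f0 in Hlt; lra).
      destruct (Rtotal_order t0 x) as [Hlt2|[E|Hlt2]]; [|contradiction|].
      + destruct (IVT (fun t => f t - y) t0 x) as [z [Hz1 Hz2]].
        { intro u. apply continuity_pt_minus; [apply fc|]. apply continuity_pt_const. intros ? ?; reflexivity. }
        { exact Hlt2. } { fold f0. lra. } { lra. }
        assert (z <> t0) by (intro E; rewrite E in Hz2; fold f0 in Hz2; lra).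
        pose proof (Hglob z). unfold h in H0. fold f0 in H0.
        replace (y - f z) with 0 in H0 by lra.
        assert ((x - z)^2 < (x - t0)^2) by nra.
        pose proof (pow2_ge_0 (y - f0)). lra.
      + destruct (IVT (fun t => y - f t) x t0) as [z [Hz1 Hz2]].
        { intro u. apply continuity_pt_minus; [|apply fc]. apply continuity_pt_const. intros ? ?; reflexivity. }
        { exact Hlt2. } { lra. } { fold f0. lra. }
        assert (z <> t0) by (intro E; rewrite E in Hz2; fold f0 in Hz2; lra).
        pose proof (Hglob z). unfold h in H0. fold f0 in H0.
        replace (y - f z) with 0 in H0 by lra.
        assert ((x - z)^2 < (x - t0)^2) by nra.
        pose proof (pow2_ge_0 (y - f0)). lra. }
    assert (HN : Rad < sqrt (x^2 + y^2)).
    { unfold epi in HpL; cbn [fst snd] in HpL.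
      pose proof (hout x). pose proof (hpos x).
      rewrite <- (sqrt_pow2 Rad) by lra. apply sqrt_lt_1_alt. split; [nra|nra]. }
    rewrite (dist_in _ _ HpL), (disk_out Rad x y hR HN) in heq.
    assert (E : real (Finite (sqrt (x^2+y^2) - Rad)) = real (Finite 0)) by now rewrite heq.
    cbn [real] in E. lra.
  - set (w := sqrt (1 + D0 ^ 2)).
    assert (Hw : 0 < w) by (unfold w; apply sqrt_lt_R0; pose proof (pow2_ge_0 D0); lra).
    assert (Hw2 : w * w = 1 + D0^2) by (unfold w; apply sqrt_sqrt; pose proof (pow2_ge_0 D0); lra).
    assert (Hnear : forall q, epi f q -> euclid (x, y) (t0, f0) <= euclid (x, y) q).
    { intros [a b] Hq. unfold epi in Hq. cbn [fst snd] in Hq. unfold euclid; cbn [fst snd].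
      apply sqrt_le_1_alt.
      pose proof (tangent f t0 D0 hconv (hd t0) a). fold f0 in H.
      assert (0 <= s * (b - f0 - D0*(a-t0))) by (apply Rmult_le_pos; lra).
      rewrite hx, hy. pose proof (pow2_ge_0 (t0 - a)). pose proof (pow2_ge_0 (f0 - b)). nra. }
    assert (Heu : euclid (x, y) (t0, f0) = s * w).
    { unfold euclid; cbn [fst snd]. rewrite <- (sqrt_pow2 (s * w)) by nra. f_equal.
      rewrite hx, hy. replace ((s*w)^2) with (s^2 * (w*w)) by ring. rewrite Hw2. ring. }
    assert (HdL : dist_set (x, y) (epi f) = Finite (s * w)).
    { rewrite <- Heu. apply glb_attained; auto. unfold epi; cbn [fst snd]. fold f0. lra. }
    assert (Hsw : 0 < s * w) by (apply Rmult_lt_0_compat; lra).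
    set (N := sqrt (x^2 + y^2)).
    assert (HN2 : N * N = x^2 + y^2) by (unfold N; apply sqrt_sqrt; apply Rplus_le_le_0_compat; apply pow2_ge_0).
    destruct (Rle_or_lt N Rad) as [HNi|HNo].
    + exfalso. rewrite (disk_inside Rad x y hR HNi), HdL in heq.
      assert (E : real (Finite 0) = real (Finite (s * w))) by now rewrite heq.
      cbn [real] in E. lra.
    + rewrite (disk_out Rad x y hR HNo), HdL in heq.
      assert (E : real (Finite (N - Rad)) = real (Finite (s * w))) by (fold N in heq; now rewrite heq).
      cbn [real] in E. clear heq. rename E into heq.
      set (a0 := alpha f t0).
      assert (Ha : a0 * w = t0 * D0 - f0) by (unfold a0, alpha; fold D0 f0 w; field; lra).
      assert (E1 : (Rad + s*w)*(Rad + s*w) = (t0 + s*D0)^2 + (f0 - s)^2).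
      { replace (Rad + s*w) with N by lra. rewrite HN2, hx, hy. ring. }
      assert (key : 2 * s * w * (Rad - a0) = t0^2 + f0^2 - Rad^2).
      { replace (2 * s * w * (Rad - a0)) with (2*s*w*Rad - 2*s*(a0*w)) by ring. rewrite Ha. nra. }
      pose proof (hout t0). fold f0 in H.
      assert (Hra : a0 < Rad).
      { destruct (Rle_or_lt Rad a0); [|lra]. exfalso.
        assert (0 <= s * w * (a0 - Rad)) by (apply Rmult_le_pos; lra). nra. }
      exists t0. fold f0 D0 w a0. split; [exact Hra|]. split; [exact Hnear|].
      rewrite <- key. split.
      * rewrite hx at 1. field. lra.
      * rewrite hy at 1. field. lra.
Qed.
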